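(* Let $N\ge3$ and $p>p_{\rm S}$. The problem $$y''+\alpha y'-y+y^p+B_0(t)y^p+B_1(t)y=0,\qquad y(t)\to1\ \text{as }t\to-\infty,$$ has a solution defined on $(-\infty,T]$ for some $T\in\mathbb{R}$, and this solution is unique near $t=-\infty$ (any two such solutions coincide on some interval $(-\infty,T']$).
   Context: $p_{\rm S}=\frac{N+2}{N-2}$, $\mu=\frac{2}{p-1}$, $a=\{\mu(N-2-\mu)\}^{\mu/2}$, $m=a^{-(p-1)/2}$, $\alpha=m(N-2-2\mu)$, $q=\frac{N-2}{2}(p-p_{\rm S})$, $B_0(t)=(1+e^{2mt})^q-1$, $B_1(t)=\frac{N(N-2)e^{2mt}}{(1+e^{2mt})^2}$. *)

(* Defs.v *)
From Stdlib Require Import Reals Lra.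
Open Scope R_scope.

Definition pS (N : nat) : R := (INR N + 2) / (INR N - 2).
Definition mu (p : R) : R := 2 / (p - 1).
Definition a_const (N : nat) (p : R) : R :=
  Rpower (mu p * (INR N - 2 - mu p)) (mu p / 2).
Definition m_const (N : nat) (p : R) : R :=
  Rpower (a_const N p) (- ((p - 1) / 2)).
Definition alpha_const (N : nat) (p : R) : R :=
  m_const N p * (INR N - 2 - 2 * mu p).
Definition q_const (N : nat) (p : R) : R := (INR N - 2) / 2 * (p - pS N).
Definition B0 (N : nat) (p : R) (t : R) : R :=
  Rpower (1 + exp (2 * m_const N p * t)) (q_const N p) - 1.
Definition B1 (N : nat) (p : R) (t : R) : R :=
  INR N * (INR N - 2) * exp (2 * m_const N p * t)
  / (1 + exp (2 * m_const N p * t)) ^ 2.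

(* y^p for real exponent p: Rpower (meaningful for y > 0, which holds near
   t = -oo since y -> 1). *)
Definition powp (y p : R) : R := Rpower y p.

Definition is_solution (N : nat) (p : R) (y : R -> R) (T : R) : Prop :=
  (exists y1 y2 : R -> R,
     forall t, t <= T ->
       derivable_pt_lim y t (y1 t) /\
       derivable_pt_lim y1 t (y2 t) /\
       y2 t + alpha_const N p * y1 t - y t + powp (y t) p
         + B0 N p t * powp (y t) p + B1 N p t * y t = 0) /\
  (forall eps, 0 < eps -> exists M, forall t, t <= M -> Rabs (y t - 1) < eps).

(* Main.v *)
Require Import Defs.
From Coquelicot Require Import Coquelicot.
From Stdlib Require Import Reals Lra Psatz Lia.
Open Scope R_scope.

Lemma D_plus f g x a b: derivable_pt_lim f x a -> derivable_pt_lim g x b ->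
  derivable_pt_lim (fun t => f t + g t) x (a+b).
Proof. intros; exact (derivable_pt_lim_plus f g x a b H H0). Qed.
Lemma D_minus f g x a b: derivable_pt_lim f x a -> derivable_pt_lim g x b ->
  derivable_pt_lim (fun t => f t - g t) x (a-b).
Proof. intros; exact (derivable_pt_lim_minus f g x a b H H0). Qed.
Lemma D_mult f g x a b: derivable_pt_lim f x a -> derivable_pt_lim g x b ->
  derivable_pt_lim (fun t => f t * g t) x (a * g x + f x * b).
Proof. intros; exact (derivable_pt_lim_mult f g x a b H H0). Qed.
Lemma D_scal c f x a: derivable_pt_lim f x a ->
  derivable_pt_lim (fun t => c * f t) x (c * a).
Proof. intros; exact (derivable_pt_lim_scal f c x a H). Qed.
Lemma D_const c x: derivable_pt_lim (fun _ => c) x 0.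
Proof. exact (derivable_pt_lim_const c x). Qed.
Lemma D_id x: derivable_pt_lim (fun t => t) x 1.
Proof. exact (derivable_pt_lim_id x). Qed.
Lemma D_comp f g x a b: derivable_pt_lim g x a -> derivable_pt_lim f (g x) b ->
  derivable_pt_lim (fun t => f (g t)) x (b * a).
Proof. intros; exact (derivable_pt_lim_comp g f x a b H H0). Qed.
Lemma D_explin c x: derivable_pt_lim (fun t => exp (c * t)) x (c * exp (c * x)).
Proof.
  replace (c * exp (c*x)) with (exp (c*x) * (c * 1)) by ring.
  apply (D_comp exp (fun t => c * t)). apply D_scal, D_id. apply derivable_pt_lim_exp.
Qed.
Lemma D_ext f g x a: (forall t, f t = g t) -> derivable_pt_lim f x a -> derivable_pt_lim g x a.
Proof. intros H D. assert (f = g) by (apply FunctionalExtensionality.functional_extensionality; auto). subst; auto. Qed.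
Lemma D_eq f x a b: a = b -> derivable_pt_lim f x a -> derivable_pt_lim f x b.
Proof. intros ->; auto. Qed.

Lemma Rabs_le_between x a : Rabs x <= a -> -a <= x <= a.
Proof. unfold Rabs; destruct Rcase_abs; lra. Qed.

Lemma sqabs x : Rabs x ^ 2 = x ^ 2.
Proof. rewrite RPow_abs, Rabs_pos_eq; nra. Qed.

Lemma incr_deriv f f' a b : a <= b ->
  (forall c, a <= c <= b -> derivable_pt_lim f c (f' c)) ->
  (forall c, a <= c <= b -> 0 <= f' c) -> f a <= f b.
Proof.
  intros Hab Hd Hp. destruct (Rle_lt_or_eq_dec _ _ Hab) as [Hlt|<-]; [|lra].
  destruct (MVT_cor2 f f' a b Hlt Hd) as [c [Hc Hc2]].
  assert (0 <= f' c) by (apply Hp; lra). nra.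
Qed.

Lemma exp_small c d : 0 < c -> 0 < d -> forall t, t <= ln d / c -> exp (c * t) <= d.
Proof.
  intros Hc Hd t Ht. rewrite <- (exp_ln d) by auto.
  destruct (Rle_lt_or_eq_dec _ _ Ht) as [h|h].
  - left. apply exp_increasing. apply (Rmult_lt_compat_l c) in h; auto.
    replace (c * (ln d / c)) with (ln d) in h by (field; lra). auto.
  - subst. right. f_equal. field. lra.
Qed.

Lemma Rpower_1_base a : Rpower 1 a = 1.
Proof. unfold Rpower. rewrite ln_1, Rmult_0_r. apply exp_0. Qed.

Lemma core_uniq (al c0 dl : R) (w w1 w2 g : R -> R) (T : R):
  0 < al -> 0 < c0 -> 0 <= dl -> dl * (2 + 2*al) <= al -> dl * (2 + 2*al) <= al * c0 ->
  (forall t, t <= T -> derivable_pt_lim w t (w1 t) /\ derivable_pt_lim w1 t (w2 t)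
       /\ w2 t = - al * w1 t - g t) ->
  (forall t, t <= T -> Rabs (w t) <= 1) ->
  (forall t, t <= T -> Rabs (g t - c0 * w t) <= dl * Rabs (w t)) ->
  forall t, t <= T -> w t = 0.
Proof.
  intros Hal Hc0 Hdl Hd1 Hd2 HD Hw Hg.
  set (c1 := c0 + 1).
  assert (Hgb : forall t, t <= T -> Rabs (g t) <= c1).
  { intros t Ht. specialize (Hw t Ht); specialize (Hg t Ht).
    assert (dl <= 1/2) by (assert (dl*2 <= dl*(2+2*al)) by nra; nra).
    assert (Rabs (c0 * w t) <= c0) by (rewrite Rabs_mult, Rabs_pos_eq by lra; nra).
    pose proof (Rabs_triang (g t - c0 * w t) (c0 * w t)).
    replace (g t - c0 * w t + c0 * w t) with (g t) in H1 by ring.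
    assert (dl * Rabs (w t) <= 1) by (pose proof (Rabs_pos (w t)); nra).
    unfold c1; lra. }
  assert (Hw1 : forall t1, t1 <= T -> Rabs (w1 t1) <= 2 * c1 / al).
  { intros t1 Ht1.
    destruct (Rle_or_lt (Rabs (w1 t1)) (2 * c1 / al)) as [|Hbig]; [auto|exfalso].
    set (G := fun s => exp (al * s) * w1 s).
    assert (HG : forall s, s <= T -> derivable_pt_lim G s (- exp (al * s) * g s)).
    { intros s Hs. destruct (HD s Hs) as [_ [H2 H3]]. unfold G.
      eapply D_eq; [|apply D_mult; [apply D_explin|exact H2]]. rewrite H3; ring. }
    set (t := t1 - 4 * al / c1 - 1).
    assert (Htt : t <= t1) by (unfold t; assert (0 < al/c1) by (unfold c1; apply Rdiv_lt_0_compat; lra); lra).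
    (* w1 keeps sign and magnitude >= c1/al on [t, t1] *)
    assert (Hk : forall s, s <= t1 -> Rabs (G s - G t1) <= c1 * exp (al * t1) / al).
    { intros s Hs.
      assert (Hp : G s + c1 * exp (al * s) / al <= G t1 + c1 * exp (al * t1) / al).
      { apply (incr_deriv (fun u => G u + c1 * exp (al * u) / al)
              (fun u => - exp (al * u) * g u + c1 * exp (al*u))); auto.
        - intros c Hc. eapply D_eq; [|apply D_plus; [apply HG; lra|]].
          2:{ unfold Rdiv. apply (D_ext (fun u => (c1 / al) * exp (al*u))).
              intros; unfold Rdiv; ring. apply D_scal, D_explin. }
          field; lra.
        - intros c Hc. pose proof (Hgb c ltac:(lra)). pose proof (exp_pos (al*c)).
          apply Rabs_le_between in H. nra. }
      assert (Hm : - G s + c1 * exp (al * s) / al <= - G t1 + c1 * exp (al * t1) / al).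
      { apply (incr_deriv (fun u => - G u + c1 * exp (al * u) / al)
              (fun u => exp (al * u) * g u + c1 * exp (al*u))); auto.
        - intros c Hc. eapply D_eq; [|apply D_plus; [apply derivable_pt_lim_opp, HG; lra|]].
          2:{ unfold Rdiv. apply (D_ext (fun u => (c1 / al) * exp (al*u))).
              intros; unfold Rdiv; ring. apply D_scal, D_explin. }
          field; lra.
        - intros c Hc. pose proof (Hgb c ltac:(lra)). pose proof (exp_pos (al*c)).
          apply Rabs_le_between in H. nra. }
      assert (0 < c1 * exp (al * s) / al) by (unfold c1; apply Rdiv_lt_0_compat; [apply Rmult_lt_0_compat; [lra|apply exp_pos]|lra]).
      apply Rabs_le; lra. }
    assert (Hexp : forall s, s <= t1 -> exp (al * s) <= exp (al * t1)).
    { intros s Hs. destruct (Rle_lt_or_eq_dec s t1 Hs) as [h|h]; [|subst; lra].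
      left; apply exp_increasing; nra. }
    assert (He1 : 0 < exp (al * t1)) by apply exp_pos.
    assert (Hc1 : 0 < c1) by (unfold c1; lra).
    assert (HGt1 : Rabs (G t1) > 2 * c1 * exp (al * t1) / al).
    { unfold G. rewrite Rabs_mult, (Rabs_pos_eq (exp _)) by lra.
      apply (Rmult_lt_compat_l (exp (al*t1))) in Hbig; auto.
      unfold Rdiv in *. nra. }
    assert (Hsg : forall s, s <= t1 -> (w1 s >= c1/al /\ w1 t1 > 0) \/ (w1 s <= - (c1/al) /\ w1 t1 < 0)).
    { intros s Hs. specialize (Hk s Hs). pose proof (Hexp s Hs) as Hes.
      pose proof (exp_pos (al * s)) as Hes0.
      apply Rabs_le_between in Hk.
      assert (Hdiv : c1 * exp (al * t1) / al / exp (al * s) >= c1 / al).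
      { unfold Rdiv. apply Rle_ge.
        rewrite (Rmult_assoc c1), (Rmult_comm (exp _)), <- Rmult_assoc, Rmult_assoc.
        rewrite <- (Rmult_1_r (c1 * /al)) at 1. apply Rmult_le_compat_l.
        apply Rmult_le_pos; [lra| left; apply Rinv_0_lt_compat; lra].
        rewrite <- (Rinv_r (exp (al*s))) by lra. apply Rmult_le_compat_r; [left; apply Rinv_0_lt_compat; lra|lra]. }
      assert (Hw1s : w1 s = G s / exp (al * s)) by (unfold G; field; lra).
      assert (Hw1t : w1 t1 = G t1 / exp (al * t1)) by (unfold G; field; lra).
      destruct (Rle_or_lt 0 (G t1)) as [Hpos|Hneg].
      - left. rewrite Rabs_pos_eq in HGt1 by lra. split.
        + rewrite Hw1s. apply Rle_ge.
          apply Rle_trans with (c1 * exp (al * t1) / al / exp (al * s)); [lra|].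
          unfold Rdiv. apply Rmult_le_compat_r; [left; apply Rinv_0_lt_compat; lra|]. lra.
        + rewrite Hw1t. apply Rdiv_lt_0_compat; [|lra].
          assert (0 < 2 * c1 * exp (al * t1) / al) by (apply Rdiv_lt_0_compat; nra). lra.
      - right. rewrite Rabs_left in HGt1 by lra. split.
        + rewrite Hw1s.
          apply Rle_trans with (- (c1 * exp (al * t1) / al) / exp (al * s)).
          * unfold Rdiv. apply Rmult_le_compat_r; [left; apply Rinv_0_lt_compat; lra|]. lra.
          * unfold Rdiv in *. lra.
        + rewrite Hw1t. unfold Rdiv. apply Rmult_neg_pos; [lra|apply Rinv_0_lt_compat; lra]. }
    destruct (Hsg t1 (Rle_refl _)) as [[_ Hpos]|[_ Hneg]].
    + assert (Hinc : w t + (c1/al) * (t1 - t) <= w t1).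
      { assert (w t + (c1/al)*(t1 - t) - (c1/al) * t1 <= w t1 - (c1/al) * t1); [|lra].
        replace (w t + c1 / al * (t1 - t) - c1 / al * t1) with (w t - c1/al * t) by ring.
        apply (incr_deriv (fun u => w u - c1/al * u) (fun u => w1 u - c1/al * 1)); auto.
        - intros c Hc. apply D_minus. apply (HD c ltac:(lra)). apply D_scal, D_id.
        - intros c Hc. destruct (Hsg c ltac:(lra)) as [[h _]|[_ h]]; lra. }
      pose proof (Hw t ltac:(lra)); pose proof (Hw t1 Ht1).
      apply Rabs_le_between in H; apply Rabs_le_between in H0.
      assert ((c1/al)*(t1 - t) = 4 + c1/al) by (unfold t; field; lra).
      assert (0 < c1/al) by (apply Rdiv_lt_0_compat; lra). lra.
    + assert (Hinc : w t1 <= w t - (c1/al) * (t1 - t)).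
      { assert (- w t - (c1/al) * t <= - w t1 - (c1/al) * t1); [|lra].
        apply (incr_deriv (fun u => - w u - c1/al * u) (fun u => - w1 u - c1/al * 1)); auto.
        - intros c Hc. apply D_minus. apply derivable_pt_lim_opp, (HD c ltac:(lra)). apply D_scal, D_id.
        - intros c Hc. destruct (Hsg c ltac:(lra)) as [[_ h]|[h _]]; lra. }
      pose proof (Hw t ltac:(lra)); pose proof (Hw t1 Ht1).
      apply Rabs_le_between in H; apply Rabs_le_between in H0.
      assert ((c1/al)*(t1 - t) = 4 + c1/al) by (unfold t; field; lra).
      assert (0 < c1/al) by (apply Rdiv_lt_0_compat; lra). lra. }
  set (K := 1 + al + c0 + al^2/2).
  set (e := al * c0 / (2 * (1 + c0))).
  set (kp := e / K).
  set (V := fun t => w1 t ^ 2 + al * w t * w1 t + (c0 + al^2/2) * w t ^ 2).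
  assert (HK : 0 < K) by (unfold K; nra).
  assert (He : 0 < e) by (unfold e; apply Rdiv_lt_0_compat; nra).
  assert (Hkp : 0 < kp) by (unfold kp; apply Rdiv_lt_0_compat; lra).
  assert (He1 : e <= al / 2) by (unfold e; apply (Rmult_le_reg_r (2*(1+c0))); [lra|]; field_simplify; [nra|lra]).
  assert (He2 : e <= al * c0 / 2) by (unfold e; apply (Rmult_le_reg_r (2*(1+c0))); [lra|]; field_simplify; [nra|lra]).
  assert (HVd : forall t, t <= T -> derivable_pt_lim V t
     (- al * w1 t ^ 2 - al * c0 * w t ^2 - 2 * (g t - c0 * w t) * w1 t - al * (g t - c0 * w t) * w t)).
  { intros t Ht. destruct (HD t Ht) as [H1 [H2 H3]]. unfold V.
    eapply D_eq; [|apply D_plus; [apply D_plus|]].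
    4:{ apply D_scal. apply (D_ext (fun u => w u * w u)). intros; ring. apply D_mult; eauto. }
    3:{ apply (D_ext (fun u => al * (w u * w1 u))). intros; ring. apply D_scal, D_mult; eauto. }
    2:{ apply (D_ext (fun u => w1 u * w1 u)). intros; ring. apply D_mult; eauto. }
    rewrite H3. field. }
  assert (HVle : forall t, t <= T -> V t <= K * (w1 t ^ 2 + w t ^ 2)).
  { intros t Ht. unfold V, K. assert (al * w t * w1 t <= al * (w1 t ^2 + w t^2)) by
      (assert (w t * w1 t <= w1 t ^2 + w t ^2) by nra; nra). nra. }
  assert (HVge : forall t, t <= T -> c0 * w t ^ 2 <= V t).
  { intros t Ht. unfold V. nra. }
  assert (HVd2 : forall t, t <= T -> - al * w1 t ^ 2 - al * c0 * w t ^2 - 2 * (g t - c0 * w t) * w1 t - al * (g t - c0 * w t) * w t <= - kp * V t).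
  { intros t Ht. specialize (Hg t Ht). set (r := g t - c0 * w t) in *.
    assert (Hr1 : Rabs (2 * r * w1 t) <= dl * (w t ^ 2 + w1 t ^ 2)).
    { rewrite !Rabs_mult, (Rabs_pos_eq 2) by lra.
      apply Rle_trans with (2 * (dl * Rabs (w t)) * Rabs (w1 t)).
      apply Rmult_le_compat_r; [apply Rabs_pos|lra].
      assert (Rabs (w t) * Rabs (w1 t) * 2 <= w t ^2 + w1 t^2).
      { rewrite <- (sqabs (w t)), <- (sqabs (w1 t)). pose proof (pow2_ge_0 (Rabs (w t) - Rabs (w1 t))). nra. }
      nra. }
    assert (Hr2 : Rabs (al * r * w t) <= al * dl * w t ^ 2).
    { rewrite !Rabs_mult, (Rabs_pos_eq al) by lra.
      rewrite <- (sqabs (w t)).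
      assert (Rabs r * Rabs (w t) <= dl * Rabs (w t) * Rabs (w t)) by (apply Rmult_le_compat_r; [apply Rabs_pos|lra]).
      simpl. nra. }
    apply Rabs_le_between in Hr1; apply Rabs_le_between in Hr2.
    pose proof (HVle t Ht).
    assert (kp * V t <= e * (w1 t ^ 2 + w t ^2)).
    { unfold kp. apply Rle_trans with (e / K * (K * (w1 t ^ 2 + w t ^ 2))).
      apply Rmult_le_compat_l; [left; apply Rdiv_lt_0_compat; lra|lra].
      right; field; lra. }
    assert (dl * (w t ^ 2 + w1 t ^ 2) + al * dl * w t ^ 2 <= (al/2) * w1 t ^2 + (al * c0 / 2) * w t ^ 2).
    { assert (0 <= w t ^2) by apply pow2_ge_0; assert (0 <= w1 t^2) by apply pow2_ge_0.
      assert (dl <= al/2) by nra. assert (dl * (1 + al) <= al * c0 / 2) by nra.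
      assert (dl * w1 t ^2 <= al/2 * w1 t^2) by (apply Rmult_le_compat_r; lra).
      assert (dl * (1 + al) * w t ^2 <= al * c0/2 * w t^2) by (apply Rmult_le_compat_r; lra).
      lra. }
    assert (e * (w1 t ^ 2 + w t ^2) <= (al/2) * w1 t ^2 + (al * c0 / 2) * w t ^ 2).
    { assert (0 <= w t ^2) by apply pow2_ge_0; assert (0 <= w1 t^2) by apply pow2_ge_0.
      assert (e * w1 t ^2 <= al/2 * w1 t^2) by (apply Rmult_le_compat_r; lra).
      assert (e * w t ^2 <= al * c0/2 * w t^2) by (apply Rmult_le_compat_r; lra).
      lra. }
    lra. }
  set (Kb := K * ((2 * c1 / al) ^ 2 + 1)).
  assert (HVb : forall t, t <= T -> V t <= Kb).
  { intros t Ht. apply Rle_trans with (1 := HVle t Ht). unfold Kb. apply Rmult_le_compat_l; [lra|].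
    pose proof (Hw1 t Ht); pose proof (Hw t Ht).
    assert (w1 t ^ 2 <= (2 * c1 / al)^2).
    { rewrite <- (sqabs (w1 t)). apply pow_incr; split; [apply Rabs_pos|auto]. }
    assert (w t ^ 2 <= 1).
    { rewrite <- (sqabs (w t)). rewrite <- (pow1 2). apply pow_incr; split; [apply Rabs_pos|auto]. }
    lra. }
  intros t0 Ht0.
  assert (Hmono : forall t, t <= t0 -> V t0 * exp (kp * t0) <= V t * exp (kp * t)).
  { intros t Ht.
    assert (- (V t * exp (kp * t)) <= - (V t0 * exp (kp * t0))); [|lra].
    apply (incr_deriv (fun u => - (V u * exp (kp * u)))
      (fun u => - ((- al * w1 u ^ 2 - al * c0 * w u ^2 - 2 * (g u - c0 * w u) * w1 u - al * (g u - c0 * w u) * w u) * exp (kp * u) + V u * (kp * exp (kp * u))))); auto.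
    - intros c Hc. apply derivable_pt_lim_opp. apply (D_mult V (fun u => exp (kp*u))). apply HVd; lra. apply D_explin.
    - intros c Hc. pose proof (HVd2 c ltac:(lra)). pose proof (exp_pos (kp * c)). nra. }
  destruct (Req_dec (w t0) 0) as [|Hne]; [auto|exfalso].
  assert (HV0 : 0 < V t0).
  { apply Rlt_le_trans with (c0 * w t0 ^2); [|apply HVge; auto].
    apply Rmult_lt_0_compat; [lra|]. apply Rsqr_pos_lt in Hne; unfold Rsqr in Hne; nra. }
  assert (HKb : V t0 <= Kb) by auto.
  assert (HKb0 : 0 < Kb) by lra.
  set (r := V t0 / (2 * Kb)).
  assert (Hr0 : 0 < r) by (unfold r; apply Rdiv_lt_0_compat; lra).
  assert (Hr1 : r < 1) by (unfold r; apply (Rmult_lt_reg_r (2*Kb)); [lra|]; field_simplify; lra).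
  set (t := t0 + ln r / kp).
  assert (Hln : ln r < 0) by (rewrite <- ln_1; apply ln_increasing; lra).
  assert (Htt : t <= t0) by (unfold t; assert (ln r / kp < 0) by (apply Rdiv_neg_pos; auto); lra).
  specialize (Hmono t Htt). specialize (HVb t ltac:(lra)).
  assert (Hexp : exp (kp * t) = exp (kp * t0) * r).
  { unfold t. rewrite Rmult_plus_distr_l, exp_plus. f_equal.
    replace (kp * (ln r / kp)) with (ln r) by (field; lra). apply exp_ln; auto. }
  rewrite Hexp in Hmono. pose proof (exp_pos (kp * t0)).
  assert (V t0 <= V t * r) by (apply (Rmult_le_reg_r (exp (kp*t0))); [auto|]; nra).
  assert (V t * r <= Kb * r) by (apply Rmult_le_compat_r; lra).
  unfold r in *. assert (Kb * (V t0 / (2 * Kb)) = V t0 / 2) by (field; lra). lra.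
Qed.

Lemma Rpower_cont1 (a : R) : forall eps, 0 < eps -> exists eta, 0 < eta /\
  forall x, Rabs (x - 1) < eta -> Rabs (Rpower x a - 1) < eps.
Proof.
  intros eps Heps.
  assert (Hc : continuity_pt (fun x => Rpower x a) 1).
  { apply derivable_continuous_pt. exists (a * Rpower 1 (a - 1)).
    apply derivable_pt_lim_power; lra. }
  destruct (Hc eps Heps) as [alp [Halp H]].
  exists (Rmin alp (1/2)). split. apply Rmin_pos; lra.
  intros x Hx. destruct (Req_dec x 1) as [->|Hne].
  - rewrite Rpower_1_base. rewrite Rminus_diag, Rabs_R0; auto.
  - pose proof (H x). simpl in H0. unfold R_dist in H0. rewrite Rpower_1_base in H0.
    apply H0. split. split; [exact I|intro; apply Hne; auto]. apply Rlt_le_trans with (1 := Hx). apply Rmin_l.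
Qed.

Lemma powdiff (p : R) : forall eps, 0 < eps -> exists eta, 0 < eta /\ eta <= 1/2 /\
  forall y z, Rabs (y - 1) < eta -> Rabs (z - 1) < eta ->
  Rabs (Rpower y p - Rpower z p - p * (y - z)) <= eps * Rabs (y - z).
Proof.
  intros eps Heps.
  destruct (Rpower_cont1 (p - 1) (eps / (Rabs p + 1))) as [eta [Heta H]].
  { apply Rdiv_lt_0_compat; [lra|]. pose proof (Rabs_pos p); lra. }
  exists (Rmin eta (1/2)). split; [apply Rmin_pos; lra|]. split; [apply Rmin_r|].
  assert (key : forall y z, z < y -> Rabs (y - 1) < Rmin eta (1/2) -> Rabs (z - 1) < Rmin eta (1/2) ->
     Rabs (Rpower y p - Rpower z p - p * (y - z)) <= eps * Rabs (y - z)).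
  { intros y z Hzy Hy Hz.
    pose proof (Rmin_l eta (1/2)); pose proof (Rmin_r eta (1/2)).
    destruct (MVT_cor2 (fun x => Rpower x p - p * x) (fun x => p * Rpower x (p - 1) - p * 1) z y Hzy)
      as [c [Hc Hc2]].
    { intros c Hc. apply D_minus. apply derivable_pt_lim_power.
      apply Rabs_def2 in Hy; apply Rabs_def2 in Hz. lra.
      apply D_scal, D_id. }
    replace (Rpower y p - Rpower z p - p * (y - z)) with (p * (Rpower c (p - 1) - 1) * (y - z)) by (simpl in Hc; lra).
    rewrite !Rabs_mult. apply Rmult_le_compat_r; [apply Rabs_pos|].
    assert (Rabs (c - 1) < eta).
    { apply Rabs_def2 in Hy; apply Rabs_def2 in Hz. apply Rabs_def1; lra. }
    specialize (H c H2).
    apply Rle_trans with (Rabs p * (eps / (Rabs p + 1))).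
    apply Rmult_le_compat_l; [apply Rabs_pos|lra].
    pose proof (Rabs_pos p).
    apply (Rmult_le_reg_r (Rabs p + 1)); [lra|]. field_simplify; nra. }
  intros y z Hy Hz. destruct (Rtotal_order y z) as [Hlt|[Heq|Hgt]].
  - replace (Rpower y p - Rpower z p - p * (y - z)) with (- (Rpower z p - Rpower y p - p * (z - y))) by ring.
    rewrite Rabs_Ropp, (Rabs_minus_sym y z). apply key; auto.
  - subst. rewrite !Rminus_diag. replace (0 - p * 0) with 0 by ring. rewrite Rabs_R0; lra.
  - apply key; auto.
Qed.

Lemma params N p : (3 <= N)%nat -> pS N < p ->
  3 <= INR N /\ 1 < p /\ 0 < mu p /\ 0 < INR N - 2 - 2 * mu p /\
  0 < m_const N p /\ 0 < alpha_const N p.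
Proof.
  intros HN Hp.
  assert (H3 : 3 <= INR N) by (replace 3 with (INR 3) by (simpl; ring); apply le_INR; auto).
  assert (HpS : 1 < pS N) by (unfold pS; apply (Rmult_lt_reg_r (INR N - 2)); [lra|]; field_simplify; lra).
  assert (Hp1 : 1 < p) by lra.
  assert (Hmu : 0 < mu p) by (unfold mu; apply Rdiv_lt_0_compat; lra).
  assert (Hk : 0 < INR N - 2 - 2 * mu p).
  { unfold mu. unfold pS in Hp.
    assert ((INR N + 2) < p * (INR N - 2)) by
      (apply (Rmult_lt_compat_r (INR N - 2)) in Hp; [|lra]; field_simplify in Hp; lra).
    apply (Rmult_lt_reg_r (p - 1)); [lra|]. field_simplify; lra. }
  assert (Hm : 0 < m_const N p) by (unfold m_const, Rpower; apply exp_pos).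
  repeat split; auto.
  unfold alpha_const; apply Rmult_lt_0_compat; auto.
Qed.

Lemma B_small N p : (3 <= N)%nat -> pS N < p -> forall eps, 0 < eps ->
  exists T, forall t, t <= T -> Rabs (B0 N p t) < eps /\ Rabs (Defs.B1 N p t) < eps.
Proof.
  intros HN Hp eps Heps. destruct (params N p HN Hp) as (H3 & Hp1 & Hmu & Hk & Hm & Hal).
  destruct (Rpower_cont1 (q_const N p) eps Heps) as [eta [Heta H]].
  set (n := INR N * (INR N - 2)).
  assert (Hn : 0 < n) by (unfold n; nra).
  set (d := Rmin (eta/2) (eps / (2*n))).
  assert (Hd : 0 < d) by (unfold d; apply Rmin_pos; apply Rdiv_lt_0_compat; lra).
  exists (ln d / (2 * m_const N p)). intros t Ht.
  pose proof (exp_small (2 * m_const N p) d ltac:(lra) Hd t Ht) as He.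
  pose proof (exp_pos (2 * m_const N p * t)) as He0.
  split.
  - unfold B0. apply H. replace (1 + exp (2 * m_const N p * t) - 1) with (exp (2 * m_const N p * t)) by ring.
    rewrite Rabs_pos_eq by lra. apply Rle_lt_trans with d; auto. apply Rle_lt_trans with (eta/2). apply Rmin_l. lra.
  - unfold Defs.B1. fold n. set (x := exp (2 * m_const N p * t)) in *.
    rewrite Rabs_pos_eq.
    + apply Rle_lt_trans with (n * x).
      * unfold Rdiv. rewrite <- (Rmult_1_r (n * x)) at 2. apply Rmult_le_compat_l; [nra|].
        rewrite <- Rinv_1. apply Rinv_le_contravar; [lra|]. nra.
      * apply Rle_lt_trans with (n * (eps / (2 * n))).
        apply Rmult_le_compat_l; [lra|]. apply Rle_trans with d; auto. apply Rmin_r.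
        field_simplify; lra.
    + unfold Rdiv. apply Rmult_le_pos; [nra|]. left; apply Rinv_0_lt_compat; nra.
Qed.

Lemma uniqueness N p : (3 <= N)%nat -> pS N < p ->
  forall (y z : R -> R) (T1 T2 : R),
     is_solution N p y T1 -> is_solution N p z T2 ->
     exists T' : R, forall t, t <= T' -> y t = z t.
Proof.
  intros HN Hp y z T1 T2 [[y1 [y2 Hy]] Hylim] [[z1 [z2 Hz]] Hzlim].
  destruct (params N p HN Hp) as (H3 & Hp1 & Hmu & Hk & Hm & Hal).
  set (al := alpha_const N p) in *. set (c0 := p - 1).
  assert (Hc0 : 0 < c0) by (unfold c0; lra).
  set (dl := al * c0 / ((2 + 2 * al) * (1 + c0))).
  assert (Hdl0 : 0 < dl) by (unfold dl; apply Rdiv_lt_0_compat; nra).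
  assert (Hdl1 : dl * (2 + 2 * al) <= al).
  { unfold dl. replace (al * c0 / ((2 + 2 * al) * (1 + c0)) * (2 + 2 * al)) with (al * (c0 / (1 + c0))) by (field; lra).
    rewrite <- (Rmult_1_r al) at 2. apply Rmult_le_compat_l; [lra|].
    apply (Rmult_le_reg_r (1+c0)); [lra|]. field_simplify; lra. }
  assert (Hdl2 : dl * (2 + 2 * al) <= al * c0).
  { unfold dl. replace (al * c0 / ((2 + 2 * al) * (1 + c0)) * (2 + 2 * al)) with ((al * c0) * (1 / (1 + c0))) by (field; lra).
    rewrite <- (Rmult_1_r (al * c0)) at 2. apply Rmult_le_compat_l; [nra|].
    apply (Rmult_le_reg_r (1+c0)); [lra|]. field_simplify; lra. }
  destruct (powdiff p (dl / 4) ltac:(lra)) as [eta [Heta [Heta2 Hpd]]].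
  set (e2 := Rmin 1 (dl / (2 * (p + 1)))).
  assert (He2 : 0 < e2) by (unfold e2; apply Rmin_pos; [lra|apply Rdiv_lt_0_compat; lra]).
  assert (He21 : e2 <= 1) by apply Rmin_l.
  assert (He22 : e2 * (p + 1) <= dl / 2).
  { apply Rle_trans with (dl / (2 * (p + 1)) * (p + 1)). apply Rmult_le_compat_r; [lra|apply Rmin_r].
    right; field; lra. }
  destruct (B_small N p HN Hp e2 He2) as [TB HB].
  destruct (Hylim eta Heta) as [My HMy].
  destruct (Hzlim eta Heta) as [Mz HMz].
  set (T' := Rmin (Rmin T1 T2) (Rmin (Rmin My Mz) TB)).
  assert (HT : forall t, t <= T' -> t <= T1 /\ t <= T2 /\ t <= My /\ t <= Mz /\ t <= TB).
  { intros t Ht. unfold T' in Ht.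
    pose proof (Rmin_l (Rmin T1 T2) (Rmin (Rmin My Mz) TB)).
    pose proof (Rmin_r (Rmin T1 T2) (Rmin (Rmin My Mz) TB)).
    pose proof (Rmin_l T1 T2); pose proof (Rmin_r T1 T2).
    pose proof (Rmin_l (Rmin My Mz) TB); pose proof (Rmin_r (Rmin My Mz) TB).
    pose proof (Rmin_l My Mz); pose proof (Rmin_r My Mz). lra. }
  exists T'. intros t Ht.
  set (g := fun t => -(y t - z t) + (powp (y t) p - powp (z t) p) + B0 N p t * powp (y t) p
     - B0 N p t * powp (z t) p + Defs.B1 N p t * y t - Defs.B1 N p t * z t).
  assert (Hw : forall t, t <= T' -> (fun t => y t - z t) t = 0).
  { apply (core_uniq al c0 dl (fun t => y t - z t) (fun t => y1 t - z1 t) (fun t => y2 t - z2 t) g T'); auto; try lra.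
    - intros s Hs. destruct (HT s Hs) as (h1 & h2 & _).
      destruct (Hy s h1) as (Hy1 & Hy2 & Hy3). destruct (Hz s h2) as (Hz1 & Hz2 & Hz3).
      split; [apply D_minus; auto|]. split; [apply D_minus; auto|].
      unfold g. lra.
    - intros s Hs. destruct (HT s Hs) as (_ & _ & h3 & h4 & _).
      pose proof (HMy s h3); pose proof (HMz s h4).
      apply Rabs_def2 in H; apply Rabs_def2 in H0. apply Rabs_le. lra.
    - intros s Hs. destruct (HT s Hs) as (_ & _ & h3 & h4 & h5).
      pose proof (HMy s h3); pose proof (HMz s h4). destruct (HB s h5) as [Hb0 Hb1].
      specialize (Hpd (y s) (z s) H H0). unfold powp in g.
      set (D := Rpower (y s) p - Rpower (z s) p - p * (y s - z s)) in *.
      set (w := y s - z s) in *.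
      replace (g s - c0 * w) with (D + B0 N p s * (D + p * w) + Defs.B1 N p s * w)
        by (unfold g, D, w, c0, powp; ring).
      set (b0 := B0 N p s) in *; set (b1 := Defs.B1 N p s) in *.
      pose proof (Rabs_pos w); pose proof (Rabs_pos b0); pose proof (Rabs_pos b1).
      pose proof (Rabs_triang (D + b0 * (D + p * w)) (b1 * w)).
      pose proof (Rabs_triang D (b0 * (D + p * w))).
      pose proof (Rabs_triang D (p * w)).
      rewrite !Rabs_mult in *. rewrite (Rabs_pos_eq p) in * by lra.
      assert (Rabs b0 * Rabs (D + p * w) <= e2 * (dl/4 * Rabs w + p * Rabs w)).
      { apply Rmult_le_compat; try lra. apply Rabs_pos. }
      assert (Rabs b1 * Rabs w <= e2 * Rabs w) by (apply Rmult_le_compat_r; lra).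
      assert (e2 * (dl/4 * Rabs w + p * Rabs w) + e2 * Rabs w <= dl/4 * Rabs w + dl/2 * Rabs w).
      { assert (e2 * dl / 4 * Rabs w <= dl/4 * Rabs w).
        { apply Rmult_le_compat_r; [auto|]. nra. }
        assert (e2 * (p+1) * Rabs w <= dl / 2 * Rabs w) by (apply Rmult_le_compat_r; lra).
        nra. }
      nra. }
  specialize (Hw t Ht). simpl in Hw. lra.
Qed.

Section Coeffs.
Variables m al n q p : R.

Definition ell (k : nat) : R := 4 * m^2 * INR k ^ 2 + 2 * m * al * INR k - 1.
Definition conv (A B : nat -> R) (j : nat) : R := sum_f_R0 (fun i => A i * B (j - i)%nat) j.
Definition uu (A B : nat -> R) (j : nat) : R :=
  sum_f_R0 (fun i => (INR (j - i) - p * INR i) * A i * B (j - i)%nat) j.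
Definition hh (A B : nat -> R) (k : nat) : R :=
  sum_f_R0 (fun i => if Nat.eqb i 0 then 0 else (INR (k - i) - p * INR i) * A i * B (k - i)%nat) (pred k).
Definition ee (A B : nat -> R) (i : nat) : R := ell i * A i + B i.
Definition eprev (A B : nat -> R) (j : nat) : R :=
  match j with O => 0 | S j' => ee A B j' end.
Definition Ebig (A B : nat -> R) (j : nat) : R := -(2 * ee A B j + eprev A B j + n * A j).
Definition Gk (A B : nat -> R) (k : nat) : R :=
  (q * conv A B (pred k) - uu A B (pred k) - hh A B k) / INR k.
Definition stepa (A B : nat -> R) (k : nat) : R := (Ebig A B (pred k) - Gk A B k) / (ell k + p).
Definition stepb (A B : nat -> R) (k : nat) : R := p * stepa A B k + Gk A B k.

Fixpoint cf (k : nat) : nat -> R * R :=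
  match k with
  | O => fun _ => (1, 1)
  | S j => fun i => if (i <=? j)%nat then cf j i else
      (stepa (fun i => fst (cf j i)) (fun i => snd (cf j i)) (S j),
       stepb (fun i => fst (cf j i)) (fun i => snd (cf j i)) (S j))
  end.

Definition ca (i : nat) : R := fst (cf i i).
Definition cb (i : nat) : R := snd (cf i i).

Lemma cf_stable : forall k i, (i <= k)%nat -> cf k i = cf i i.
Proof.
  induction k as [|j IH]; intros i Hi.
  - assert (i = 0%nat) by lia. subst; reflexivity.
  - destruct (Nat.le_gt_cases i j) as [h|h].
    + simpl. replace (i <=? j)%nat with true by (symmetry; apply Nat.leb_le; auto). auto.
    + assert (i = S j) by lia. subst; reflexivity.
Qed.

Lemma step_ext (A B A' B' : nat -> R) (j : nat) :
  (forall i, (i <= j)%nat -> A i = A' i /\ B i = B' i) ->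
  stepa A B (S j) = stepa A' B' (S j) /\ stepb A B (S j) = stepb A' B' (S j).
Proof.
  intros H.
  assert (HE : Ebig A B j = Ebig A' B' j).
  { unfold Ebig, eprev, ee. destruct j as [|j'].
    - destruct (H 0%nat (le_n _)) as [h1 h2]. rewrite h1, h2; auto.
    - destruct (H (S j') (le_n _)) as [h1 h2]. destruct (H j' ltac:(lia)) as [h3 h4].
      rewrite h1, h2, h3, h4; auto. }
  assert (HG : Gk A B (S j) = Gk A' B' (S j)).
  { unfold Gk, conv, uu, hh. simpl pred.
    assert (E1 : sum_f_R0 (fun i => A i * B (j - i)%nat) j = sum_f_R0 (fun i => A' i * B' (j - i)%nat) j).
    { apply sum_eq. intros i Hi. destruct (H i Hi) as [h1 _]. destruct (H (j - i)%nat ltac:(lia)) as [_ h2].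
      rewrite h1, h2; auto. }
    assert (E2 : sum_f_R0 (fun i => (INR (j - i) - p * INR i) * A i * B (j - i)%nat) j
               = sum_f_R0 (fun i => (INR (j - i) - p * INR i) * A' i * B' (j - i)%nat) j).
    { apply sum_eq. intros i Hi. destruct (H i Hi) as [h1 _]. destruct (H (j - i)%nat ltac:(lia)) as [_ h2].
      rewrite h1, h2; auto. }
    assert (E3 : sum_f_R0 (fun i => if Nat.eqb i 0 then 0 else (INR (S j - i) - p * INR i) * A i * B (S j - i)%nat) j
               = sum_f_R0 (fun i => if Nat.eqb i 0 then 0 else (INR (S j - i) - p * INR i) * A' i * B' (S j - i)%nat) j).
    { apply sum_eq. intros i Hi. destruct (Nat.eqb i 0) eqn:E; auto.
      apply Nat.eqb_neq in E.
      destruct (H i Hi) as [h1 _]. destruct (H (S j - i)%nat ltac:(lia)) as [_ h2].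
      rewrite h1, h2; auto. }
    rewrite E1, E2, E3. auto. }
  unfold stepb, stepa. simpl pred. rewrite HE, HG. auto.
Qed.

Lemma ca0 : ca 0 = 1. Proof. reflexivity. Qed.
Lemma cb0 : cb 0 = 1. Proof. reflexivity. Qed.

Lemma cf_S j : cf (S j) (S j) = (stepa (fun i => fst (cf j i)) (fun i => snd (cf j i)) (S j),
       stepb (fun i => fst (cf j i)) (fun i => snd (cf j i)) (S j)).
Proof.
  change (cf (S j) (S j)) with (if (S j <=? j)%nat then cf j (S j) else
      (stepa (fun i => fst (cf j i)) (fun i => snd (cf j i)) (S j),
       stepb (fun i => fst (cf j i)) (fun i => snd (cf j i)) (S j))).
  rewrite (proj2 (Nat.leb_gt (S j) j) (Nat.lt_succ_diag_r j)). reflexivity.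
Qed.

Lemma cab_S j : ca (S j) = stepa ca cb (S j) /\ cb (S j) = stepb ca cb (S j).
Proof.
  destruct (step_ext (fun i => fst (cf j i)) (fun i => snd (cf j i)) ca cb j) as [h1 h2].
  { intros i Hi. unfold ca, cb. rewrite cf_stable by auto. auto. }
  split; [unfold ca at 1|unfold cb at 1]; rewrite cf_S; simpl fst; simpl snd; auto.
Qed.

Lemma sum_split0 (F : nat -> R) (j : nat) :
  sum_f_R0 F j = F 0%nat + sum_f_R0 (fun i => if Nat.eqb i 0 then 0 else F i) j.
Proof.
  induction j as [|j IH].
  - simpl. ring.
  - rewrite !tech5, IH. simpl. ring.
Qed.

Lemma uu_split (A B : nat -> R) (j : nat) : A 0%nat = 1 -> B 0%nat = 1 ->
  uu A B (S j) = INR (S j) * B (S j) - p * INR (S j) * A (S j) + hh A B (S j).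
Proof.
  intros HA HB. unfold uu, hh. rewrite tech5. simpl pred.
  rewrite sum_split0. rewrite Nat.sub_diag, HB. rewrite Nat.sub_0_r, HA.
  simpl (INR 0). ring.
Qed.

Hypothesis Hm : 0 < m.
Hypothesis Hal : 0 <= al.
Hypothesis Hp : 1 < p.

Lemma ellp_pos k : (1 <= k)%nat -> 4 * m^2 * INR k ^ 2 <= ell k + p.
Proof.
  intros Hk. unfold ell. assert (0 <= INR k) by apply pos_INR.
  assert (0 <= m * al * INR k) by (apply Rmult_le_pos; [nra|auto]). lra.
Qed.

Lemma ellp_pos' k : 0 < ell k + p.
Proof. unfold ell. assert (0 <= INR k) by apply pos_INR.
  assert (0 <= m * al * INR k) by (apply Rmult_le_pos; [nra|auto]).
  assert (0 <= m^2 * INR k ^2) by (apply Rmult_le_pos; nra). lra. Qed.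

Lemma ee0 : ee ca cb 0 = 0.
Proof. unfold ee, ell. rewrite ca0, cb0. simpl. ring. Qed.

Lemma uu0 : uu ca cb 0 = 0.
Proof. unfold uu. simpl. ring. Qed.

Lemma rec_e j : ee ca cb (S j) = Ebig ca cb j.
Proof.
  destruct (cab_S j) as [h1 h2]. unfold ee. rewrite h2. unfold stepb.
  rewrite h1. unfold stepa. simpl pred. pose proof (ellp_pos' (S j)). field. lra.
Qed.

Lemma rec_u j : uu ca cb (S j) = q * conv ca cb j - uu ca cb j.
Proof.
  rewrite uu_split by reflexivity.
  destruct (cab_S j) as [h1 h2]. rewrite h2. unfold stepb. rewrite <- h1.
  unfold Gk. simpl pred. pose proof (pos_INR j). rewrite S_INR. field. lra.
Qed.


Hypothesis Hn : 0 <= n.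

Definition om (i : nat) : R := / (INR i + 1) ^ 2.

Lemma om_pos i : 0 < om i.
Proof. unfold om. apply Rinv_0_lt_compat. pose proof (pos_INR i). nra. Qed.
Lemma om_le1 i : om i <= 1.
Proof. unfold om. pose proof (pos_INR i). rewrite <- Rinv_1. apply Rinv_le_contravar; nra. Qed.

Lemma sum_om N : sum_f_R0 om N <= 2 - / (INR N + 1).
Proof.
  induction N as [|N IH].
  - simpl sum_f_R0. unfold om. replace (INR 0) with 0 by reflexivity. rewrite Rplus_0_l, pow1, Rinv_1. lra.
  - rewrite tech5. unfold om in *. rewrite S_INR. pose proof (pos_INR N).
    assert (/ (INR N + 1 + 1) ^ 2 + / (INR N + 1 + 1) <= / (INR N + 1)).
    { apply (Rmult_le_reg_r ((INR N + 1 + 1)^2 * (INR N + 1))). nra.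
      field_simplify; try nra. }
    lra.
Qed.

Lemma sum_bound (F : nat -> R) (c : R) (N : nat) :
  0 <= c -> (forall i, (i <= N)%nat -> Rabs (F i) <= c * om i) -> Rabs (sum_f_R0 F N) <= 2 * c.
Proof.
  intros Hc H. eapply Rle_trans; [apply sum_f_R0_triangle|].
  eapply Rle_trans; [apply (sum_Rle _ (fun i => c * om i)); auto|].
  replace (sum_f_R0 (fun i => c * om i) N) with (c * sum_f_R0 om N)
    by (rewrite scal_sum; apply sum_eq; intros; ring).
  pose proof (sum_om N). pose proof (pos_INR N).
  assert (0 < / (INR N + 1)) by (apply Rinv_0_lt_compat; lra).
  rewrite (Rmult_comm 2). apply Rmult_le_compat_l; lra.
Qed.

Definition Lc : R := 4 * m^2 + 2 * m * al + 1.

Lemma ell_bound i : Rabs (ell i) <= Lc * (INR i + 1) ^ 2.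
Proof.
  unfold ell, Lc. pose proof (pos_INR i). assert (0 <= m * al) by nra.
  assert (0 <= m * al * INR i) by (apply Rmult_le_pos; auto).
  assert (0 <= m^2 * INR i ^2) by (apply Rmult_le_pos; nra).
  apply Rabs_le. split.
  - assert (0 <= (4 * m ^ 2 + 2 * m * al + 1) * (INR i + 1) ^ 2 - 1).
    { assert (1 <= (INR i + 1)^2) by nra. assert (0 <= 4 * m^2 + 2*m*al) by nra. nra. }
    lra.
  - assert (m^2 * INR i ^2 <= m^2 * (INR i + 1)^2) by (apply Rmult_le_compat_l; nra).
    assert (m * al * INR i <= m * al * (INR i + 1)^2) by (apply Rmult_le_compat_l; nra).
    nra.
Qed.

Section Bounds.
Variables A B M : R.
Hypothesis HA : 0 <= A.
Hypothesis HB : 1 <= B.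
Hypothesis HM : 1 <= M.

Definition Inv (k : nat) : Prop := forall i, (1 <= i <= k)%nat ->
  Rabs (ca i) <= A * M ^ (i - 1) * om i /\ Rabs (cb i) <= B * M ^ (i - 1).

Lemma powM_le a b : (a <= b)%nat -> M ^ a <= M ^ b.
Proof. intros; apply Rle_pow; auto. Qed.

Lemma powM_pos a : 0 < M ^ a.
Proof. apply pow_lt; lra. Qed.

Lemma prod_b1 J i l : Inv J -> (1 <= i <= J)%nat -> (1 <= l <= J)%nat ->
  Rabs (ca i * cb l) <= A * B * M ^ (i + l - 2) * om i.
Proof.
  intros H Hi Hl. destruct (H i Hi) as [h1 _]. destruct (H l Hl) as [_ h2].
  rewrite Rabs_mult. replace (i + l - 2)%nat with ((i - 1) + (l - 1))%nat by lia.
  rewrite pow_add. pose proof (om_pos i). pose proof (powM_pos (i-1)). pose proof (powM_pos (l-1)).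
  apply Rle_trans with ((A * M ^ (i - 1) * om i) * (B * M ^ (l - 1))).
  apply Rmult_le_compat; auto using Rabs_pos.
  right; ring.
Qed.

Lemma prod_b0 J i : Inv J -> (1 <= i <= J)%nat ->
  Rabs (ca i * cb 0) <= A * B * M ^ (i - 1) * om i.
Proof.
  intros H Hi. destruct (H i Hi) as [h1 _]. rewrite cb0, Rmult_1_r.
  pose proof (om_pos i). pose proof (powM_pos (i-1)).
  apply Rle_trans with (1 := h1).
  assert (0 <= A * M ^ (i - 1) * om i) by (apply Rmult_le_pos; [apply Rmult_le_pos|]; lra).
  replace (A * B * M ^ (i - 1) * om i) with (B * (A * M ^ (i - 1) * om i)) by ring. nra.
Qed.

Definition Cc : R := 2 * (B + A * B).

Lemma conv_bound j : (1 <= j)%nat -> Inv j -> Rabs (conv ca cb j) <= Cc * M ^ (j - 1).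
Proof.
  intros Hj H. unfold Cc.
  replace (2 * (B + A * B) * M ^ (j - 1)) with (2 * ((B + A * B) * M ^ (j - 1))) by ring.
  apply sum_bound. pose proof (powM_pos (j-1)). assert (0 <= A * B) by nra. nra.
  intros i Hi. pose proof (powM_pos (j-1)). pose proof (om_pos i). assert (0 <= A * B) by nra.
  destruct (Nat.eq_dec i 0) as [->|Hi0].
  - rewrite ca0, Rmult_1_l, Nat.sub_0_r. destruct (H j ltac:(lia)) as [_ h2].
    unfold om. simpl INR. replace (/ (0 + 1) ^ 2) with 1 by (simpl; field).
    assert (0 <= A * B * M ^ (j - 1)) by nra. nra.
  - destruct (Nat.eq_dec i j) as [->|Hij].
    + rewrite Nat.sub_diag. eapply Rle_trans; [apply (prod_b0 j); auto; lia|].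
      assert (0 <= B * M ^ (j-1) * om j) by (apply Rmult_le_pos; nra). nra.
    + eapply Rle_trans; [apply (prod_b1 j); auto; lia|].
      replace (i + (j - i) - 2)%nat with (j - 2)%nat by lia.
      assert (M ^ (j - 2) <= M ^ (j - 1)) by (apply powM_le; lia).
      assert (A * B * M ^ (j - 2) * om i <= A * B * M ^ (j - 1) * om i).
      { apply Rmult_le_compat_r; [lra|]. apply Rmult_le_compat_l; auto. }
      assert (0 <= B * M ^ (j-1) * om i) by (apply Rmult_le_pos; nra). nra.
Qed.

Lemma coef_le j i : (i <= j)%nat -> Rabs (INR (j - i) - p * INR i) <= (1 + p) * INR j.
Proof.
  intros Hi. rewrite minus_INR by auto. pose proof (pos_INR i). apply le_INR in Hi.
  apply Rabs_le. split; nra.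
Qed.

Lemma uu_bound j : (1 <= j)%nat -> Inv j -> Rabs (uu ca cb j) <= (1 + p) * INR j * Cc * M ^ (j - 1).
Proof.
  intros Hj H. unfold uu, Cc.
  replace ((1 + p) * INR j * (2 * (B + A * B)) * M ^ (j - 1)) with (2 * ((1 + p) * INR j * (B + A * B) * M ^ (j - 1))) by ring.
  pose proof (pos_INR j). pose proof (powM_pos (j-1)). assert (0 <= A * B) by nra.
  apply sum_bound. apply Rmult_le_pos; [|lra]. apply Rmult_le_pos; [|lra]. nra.
  intros i Hi. pose proof (om_pos i).
  rewrite Rmult_assoc, Rabs_mult.
  assert (Hc : Rabs (ca i * cb (j - i)%nat) <= (B + A * B) * M ^ (j - 1) * om i).
  { destruct (Nat.eq_dec i 0) as [->|Hi0].
    - rewrite ca0, Rmult_1_l, Nat.sub_0_r. destruct (H j ltac:(lia)) as [_ h2].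
      unfold om. simpl INR. replace (/ (0 + 1) ^ 2) with 1 by (simpl; field).
      assert (0 <= A * B * M ^ (j - 1)) by nra. nra.
    - destruct (Nat.eq_dec i j) as [->|Hij].
      + rewrite Nat.sub_diag. eapply Rle_trans; [apply (prod_b0 j); auto; lia|].
        assert (0 <= B * M ^ (j-1) * om j) by (apply Rmult_le_pos; nra). nra.
      + eapply Rle_trans; [apply (prod_b1 j); auto; lia|].
        replace (i + (j - i) - 2)%nat with (j - 2)%nat by lia.
        assert (M ^ (j - 2) <= M ^ (j - 1)) by (apply powM_le; lia).
        assert (A * B * M ^ (j - 2) * om i <= A * B * M ^ (j - 1) * om i).
        { apply Rmult_le_compat_r; [lra|]. apply Rmult_le_compat_l; auto. }
        assert (0 <= B * M ^ (j-1) * om i) by (apply Rmult_le_pos; nra). nra. }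
  replace ((1 + p) * INR j * (B + A * B) * M ^ (j - 1) * om i) with (((1 + p) * INR j) * ((B + A * B) * M ^ (j - 1) * om i)) by ring.
  apply Rmult_le_compat; auto using Rabs_pos, coef_le.
Qed.

Lemma hh_bound k : (2 <= k)%nat -> Inv (pred k) -> Rabs (hh ca cb k) <= (1 + p) * INR k * (2 * A * B) * M ^ (k - 2).
Proof.
  intros Hk H. unfold hh.
  replace ((1 + p) * INR k * (2 * A * B) * M ^ (k - 2)) with (2 * ((1 + p) * INR k * (A * B) * M ^ (k - 2))) by ring.
  pose proof (pos_INR k). pose proof (powM_pos (k-2)). assert (0 <= A * B) by nra.
  apply sum_bound. apply Rmult_le_pos; [|lra]. apply Rmult_le_pos; [|lra]. nra.
  intros i Hi. pose proof (om_pos i).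
  destruct (Nat.eqb i 0) eqn:E.
  - rewrite Rabs_R0. apply Rmult_le_pos; [|lra]. apply Rmult_le_pos; [|lra]. apply Rmult_le_pos; [|lra]. nra.
  - apply Nat.eqb_neq in E. rewrite Rmult_assoc, Rabs_mult.
    replace ((1 + p) * INR k * (A * B) * M ^ (k - 2) * om i) with (((1 + p) * INR k) * (A * B * M ^ (i + (k - i) - 2) * om i))
      by (replace (i + (k - i) - 2)%nat with (k - 2)%nat by lia; ring).
    apply Rmult_le_compat; auto using Rabs_pos. apply coef_le; lia.
    apply (prod_b1 (pred k)); auto; lia.
Qed.

End Bounds.


Definition Ac : R := (n + Rabs q + 1) / m^2.
Definition Bc : R := p * Ac + Rabs q + 1.
Definition CEc : R := 3 * (Lc * Ac + Bc) + n * Ac.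
Definition Cgc : R := Rabs q * Cc Ac Bc + (1 + p) * Cc Ac Bc + 2 * (1 + p) * Ac * Bc.
Definition Mc : R := 1 + CEc + Cgc.

Lemma consts_pos : 0 < Ac /\ 1 <= Bc /\ 0 <= Lc /\ 0 <= CEc /\ 0 <= Cgc /\ 1 <= Mc /\ Cgc <= Mc /\ CEc + Cgc <= Mc
   /\ m^2 * Ac = n + Rabs q + 1.
Proof.
  pose proof (Rabs_pos q).
  assert (HA : 0 < Ac) by (unfold Ac; apply Rdiv_lt_0_compat; nra).
  assert (HB : 1 <= Bc) by (unfold Bc; nra).
  assert (HL : 0 <= Lc) by (unfold Lc; assert (0 <= m * al) by nra; nra).
  assert (HC : 0 <= Cc Ac Bc) by (unfold Cc; nra).
  assert (HE : 0 <= CEc) by (unfold CEc; nra).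
  assert (HG : 0 <= Cgc) by (unfold Cgc; assert (0 <= Ac * Bc) by nra; nra).
  unfold Mc. repeat split; try lra.
  unfold Ac. field. lra.
Qed.

Lemma ee_bound A B M i : 0 <= A -> 1 <= B -> 1 <= M -> Inv A B M i -> (1 <= i)%nat ->
  Rabs (ee ca cb i) <= (Lc * A + B) * M ^ (i - 1).
Proof.
  intros HA HB HM H Hi. destruct (H i ltac:(lia)) as [h1 h2]. unfold ee.
  eapply Rle_trans; [apply Rabs_triang|]. rewrite Rabs_mult.
  pose proof (ell_bound i). pose proof (om_pos i). pose proof (powM_pos M HM (i-1)).
  assert (Rabs (ell i) * Rabs (ca i) <= (Lc * (INR i + 1) ^ 2) * (A * M ^ (i - 1) * om i))
    by (apply Rmult_le_compat; auto using Rabs_pos).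
  replace ((Lc * (INR i + 1) ^ 2) * (A * M ^ (i - 1) * om i)) with (Lc * A * M ^ (i-1)) in H3.
  lra. unfold om. pose proof (pos_INR i). field. nra.
Qed.

Lemma step_inv j : Inv Ac Bc Mc j -> Inv Ac Bc Mc (S j).
Proof.
  destruct consts_pos as (HA & HB & HL & HE & HG & HM & HM2 & HM3 & HmA).
  intros H i Hi. destruct (Nat.le_gt_cases i j) as [Hij|Hij]; [apply H; lia|].
  assert (i = S j) by lia. subst i. clear Hi Hij.
  destruct (cab_S j) as [ha hb].
  assert (Hell : 4 * m^2 * INR (S j) ^ 2 <= ell (S j) + p) by (apply ellp_pos; lia).
  pose proof (Rabs_pos q) as Hq.
  destruct j as [|j].
  -
    assert (HG1 : Gk ca cb 1 = q).
    { unfold Gk, conv, uu, hh. simpl. rewrite ca0, cb0. field. }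
    assert (HE1 : Ebig ca cb 0 = - n).
    { unfold Ebig, eprev. rewrite ee0, ca0. ring. }
    assert (Ha1 : Rabs (ca 1) <= (n + Rabs q) / (4 * m^2)).
    { rewrite ha. unfold stepa. simpl pred. rewrite HG1, HE1.
      replace (INR 1) with 1 in Hell by reflexivity.
      unfold Rdiv. rewrite Rabs_mult, Rabs_inv.
      rewrite (Rabs_pos_eq (ell 1 + p)) by nra.
      apply Rmult_le_compat. apply Rabs_pos. left; apply Rinv_0_lt_compat; nra.
      eapply Rle_trans; [apply Rabs_triang|]. rewrite Rabs_Ropp, Rabs_Ropp, Rabs_pos_eq by lra. lra.
      apply Rinv_le_contravar; nra. }
    assert (HAq : (n + Rabs q) / (4 * m^2) <= Ac / 4).
    { apply (Rmult_le_reg_r (4 * m^2)); [nra|]. unfold Rdiv. rewrite Rmult_assoc, Rinv_l by nra.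
      replace (Ac * / 4 * (4 * m^2)) with (m^2 * Ac) by field. lra. }
    simpl (1 - 1)%nat. rewrite pow_O. unfold om. replace (INR 1) with 1 by reflexivity.
    replace (/ (1 + 1) ^ 2) with (/4) by field.
    split. lra.
    rewrite hb. unfold stepb. rewrite <- ha. rewrite HG1.
    eapply Rle_trans; [apply Rabs_triang|]. rewrite Rabs_mult, (Rabs_pos_eq p) by lra.
    unfold Bc. nra.
  -
    set (k := S (S j)) in *.
    assert (HInvj : Inv Ac Bc Mc (S j)) by auto.
    pose proof (pos_INR j) as Hj0.
    assert (HkR : INR k = INR j + 2) by (unfold k; rewrite !S_INR; ring).
    assert (HGb : Rabs (Gk ca cb k) <= Cgc * Mc ^ j).
    { unfold Gk. simpl pred.
      pose proof (conv_bound Ac Bc Mc ltac:(lra) ltac:(lra) HM (S j) ltac:(lia) HInvj) as Hc.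
      pose proof (uu_bound Ac Bc Mc ltac:(lra) ltac:(lra) HM (S j) ltac:(lia) HInvj) as Hu.
      pose proof (hh_bound Ac Bc Mc ltac:(lra) ltac:(lra) HM k ltac:(unfold k; lia) HInvj) as Hh.
      replace (S j - 1)%nat with j in Hc, Hu by lia. replace (k - 2)%nat with j in Hh by (unfold k; lia).
      rewrite S_INR in Hu. rewrite HkR in Hh |- *.
      pose proof (powM_pos Mc HM j) as HMj.
      assert (HCc : 0 <= Cc Ac Bc) by (unfold Cc; nra).
      unfold Rdiv. rewrite Rabs_mult, Rabs_inv, (Rabs_pos_eq (INR j + 2)) by lra.
      apply (Rmult_le_reg_r (INR j + 2)); [lra|]. rewrite Rmult_assoc, Rinv_l, Rmult_1_r by lra.
      eapply Rle_trans; [apply Rabs_triang|].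
      unfold Rminus at 1. eapply Rle_trans. apply Rplus_le_compat_r. apply Rabs_triang.
      rewrite !Rabs_Ropp, Rabs_mult.
      assert (Rabs q * Rabs (conv ca cb (S j)) <= Rabs q * (Cc Ac Bc * Mc ^ j)) by (apply Rmult_le_compat_l; auto).
      unfold Cgc.
      assert (Rabs q * (Cc Ac Bc * Mc ^ j) <= Rabs q * Cc Ac Bc * Mc ^ j * (INR j + 2)).
      { replace (Rabs q * (Cc Ac Bc * Mc ^ j)) with (Rabs q * Cc Ac Bc * Mc ^ j * 1) by ring.
        apply Rmult_le_compat_l; [|lra]. apply Rmult_le_pos; [nra|lra]. }
      assert ((1 + p) * (INR j + 1) * Cc Ac Bc * Mc ^ j <= (1 + p) * Cc Ac Bc * Mc ^ j * (INR j + 2)).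
      { replace ((1 + p) * (INR j + 1) * Cc Ac Bc * Mc ^ j) with ((1 + p) * Cc Ac Bc * Mc ^ j * (INR j + 1)) by ring.
        apply Rmult_le_compat_l; [|lra]. apply Rmult_le_pos; [nra|lra]. }
      nra. }
    assert (HEb : Rabs (Ebig ca cb (S j)) <= CEc * Mc ^ j).
    { unfold Ebig, eprev. rewrite Rabs_Ropp.
      pose proof (ee_bound Ac Bc Mc (S j) ltac:(lra) ltac:(lra) HM HInvj ltac:(lia)) as He1.
      replace (S j - 1)%nat with j in He1 by lia.
      assert (He2 : Rabs (ee ca cb j) <= (Lc * Ac + Bc) * Mc ^ j).
      { destruct j as [|j']. rewrite ee0, Rabs_R0. pose proof (powM_pos Mc HM 0). apply Rmult_le_pos; nra.
        eapply Rle_trans. apply (ee_bound Ac Bc Mc (S j') ltac:(lra) ltac:(lra) HM); [|lia].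
        intros i Hi; apply HInvj; lia.
        apply Rmult_le_compat_l; [nra|]. apply powM_le; auto; lia. }
      destruct (HInvj (S j) ltac:(lia)) as [Ha _]. replace (S j - 1)%nat with j in Ha by lia.
      pose proof (om_le1 (S j)). pose proof (powM_pos Mc HM j).
      assert (Rabs (ca (S j)) <= Ac * Mc ^ j).
      { eapply Rle_trans; [apply Ha|]. rewrite <- (Rmult_1_r (Ac * Mc ^ j)) at 2.
        apply Rmult_le_compat_l; [apply Rmult_le_pos; lra| auto]. }
      eapply Rle_trans; [apply Rabs_triang|]. rewrite Rabs_mult, (Rabs_pos_eq n) by lra.
      eapply Rle_trans. apply Rplus_le_compat_r. apply Rabs_triang.
      rewrite Rabs_mult, (Rabs_pos_eq 2) by lra.
      unfold CEc.
      assert (n * Rabs (ca (S j)) <= n * (Ac * Mc ^ j)) by (apply Rmult_le_compat_l; auto).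
      nra. }
    assert (HMj1 : Mc ^ (k - 1) = Mc * Mc ^ j) by (unfold k; replace (S (S j) - 1)%nat with (S j) by lia; reflexivity).
    pose proof (powM_pos Mc HM j) as HMj.
    assert (Hak : Rabs (ca k) <= Ac * Mc ^ (k - 1) * om k).
    { rewrite ha. unfold stepa. fold k. simpl pred.
      rewrite HMj1. unfold om. rewrite HkR in *.
      unfold Rdiv. rewrite Rabs_mult, Rabs_inv.
      assert (Hellk : 4 * m ^ 2 * (INR j + 2) ^ 2 <= ell k + p) by lra.
      rewrite (Rabs_pos_eq (ell k + p)) by nra.
      assert (Hnum : Rabs (Ebig ca cb (S j) - Gk ca cb k) <= (CEc + Cgc) * Mc ^ j).
      { eapply Rle_trans; [apply Rabs_triang|]. rewrite Rabs_Ropp. lra. }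
      apply Rle_trans with ((CEc + Cgc) * Mc ^ j * / (4 * m ^ 2 * (INR j + 2) ^ 2)).
      apply Rmult_le_compat; auto using Rabs_pos. left; apply Rinv_0_lt_compat; nra.
      apply Rinv_le_contravar; nra.
      apply Rle_trans with ((m^2 * Ac * Mc) * Mc ^ j * / (m ^ 2 * (INR j + 2 + 1) ^ 2)).
      apply Rmult_le_compat. nra. left; apply Rinv_0_lt_compat; nra.
      apply Rmult_le_compat_r; [lra|]. rewrite HmA. nra.
      apply Rinv_le_contravar; nra.
      right. field. nra. }
    split; [exact Hak|].
    rewrite hb. unfold stepb. fold k. rewrite <- ha. rewrite HMj1 in *.
    pose proof (om_le1 k). pose proof (om_pos k).
    assert (Hak2 : Rabs (ca k) <= Ac * Mc * Mc ^ j).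
    { eapply Rle_trans; [apply Hak|]. rewrite <- (Rmult_1_r (Ac * Mc * Mc ^ j)).
      replace (Ac * (Mc * Mc ^ j) * om k) with (Ac * Mc * Mc ^ j * om k) by ring.
      apply Rmult_le_compat_l; [|auto]. apply Rmult_le_pos; [|lra]. nra. }
    eapply Rle_trans; [apply Rabs_triang|]. rewrite Rabs_mult, (Rabs_pos_eq p) by lra.
    assert (p * Rabs (ca k) <= p * (Ac * Mc * Mc ^ j)) by (apply Rmult_le_compat_l; lra).
    assert (Cgc * Mc ^ j <= Mc * Mc ^ j) by (apply Rmult_le_compat_r; lra).
    assert (0 <= Rabs q * (Mc * Mc^j)) by (apply Rmult_le_pos; nra).
    unfold Bc. lra.
Qed.


Lemma inv_all k : Inv Ac Bc Mc k.
Proof.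
  induction k as [|k IH].
  - intros i Hi; lia.
  - apply step_inv; auto.
Qed.

Definition Kc : R := 1 + Ac + Bc.

Lemma geo k : Rabs (ca k) <= Kc * Mc ^ k /\ Rabs (cb k) <= Kc * Mc ^ k.
Proof.
  destruct consts_pos as (HA & HB & HL & HE & HG & HM & HM2 & HM3 & HmA).
  pose proof (powM_pos Mc HM k).
  destruct k as [|k].
  - rewrite ca0, cb0, Rabs_R1. unfold Kc. simpl. lra.
  - destruct (inv_all (S k) (S k) ltac:(lia)) as [h1 h2].
    replace (S k - 1)%nat with k in h1, h2 by lia.
    pose proof (powM_pos Mc HM k). pose proof (om_le1 (S k)). pose proof (om_pos (S k)).
    assert (Mc ^ k <= Mc ^ S k) by (apply powM_le; auto).
    split.
    + eapply Rle_trans; [apply h1|]. unfold Kc.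
      assert (Ac * Mc ^ k * om (S k) <= Ac * Mc ^ k) by
        (rewrite <- (Rmult_1_r (Ac * Mc ^ k)) at 2; apply Rmult_le_compat_l; [apply Rmult_le_pos|]; lra).
      assert (Ac * Mc ^ k <= Ac * Mc ^ S k) by (apply Rmult_le_compat_l; lra). nra.
    + eapply Rle_trans; [apply h2|]. unfold Kc.
      assert (Bc * Mc ^ k <= Bc * Mc ^ S k) by (apply Rmult_le_compat_l; lra). nra.
Qed.

Definition r0 : R := / Mc.

Lemma radius_ge (c : nat -> R) : (forall k, Rabs (c k) <= Kc * Mc ^ k) -> Rbar_le r0 (CV_radius c).
Proof.
  destruct consts_pos as (HA & HB & HL & HE & HG & HM & HM2 & HM3 & HmA).
  intros H. destruct (CV_radius_bounded c) as [Hub _]. apply Hub.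
  exists Kc. intros k. rewrite Rabs_mult. unfold r0. rewrite <- RPow_abs.
  rewrite (Rabs_pos_eq (/ Mc)) by (left; apply Rinv_0_lt_compat; lra).
  rewrite pow_inv. pose proof (powM_pos Mc HM k).
  apply (Rmult_le_reg_r (Mc ^ k)); auto. rewrite Rmult_assoc, Rinv_l by lra. specialize (H k). lra.
Qed.

Definition Dop (c : nat -> R) (k : nat) : R := INR k * c k.

Lemma radius_D c : CV_radius (Dop c) = CV_radius c.
Proof.
  transitivity (CV_radius (PS_incr_1 (PS_derive c))).
  2:{ rewrite CV_radius_incr_1. apply CV_radius_derive. }
  apply CV_radius_ext.
  intros [|k]; unfold Dop, PS_incr_1, PS_derive; [|reflexivity].
  change (INR 0 * c 0%nat = 0). simpl INR. ring.
Qed.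

Lemma PSeries_D c x : PSeries (Dop c) x = x * PSeries (PS_derive c) x.
Proof.
  rewrite <- PSeries_incr_1. apply PSeries_ext.
  intros [|k]; unfold Dop, PS_incr_1, PS_derive; [|reflexivity].
  change (INR 0 * c 0%nat = 0). simpl INR. ring.
Qed.

Lemma deriv_ps (c : nat -> R) t : Rbar_lt (Rabs (exp (2*m*t))) (CV_radius c) ->
  derivable_pt_lim (fun t => PSeries c (exp (2*m*t))) t (2*m*PSeries (Dop c) (exp (2*m*t))).
Proof.
  intros H. eapply D_eq; [|apply (D_comp (PSeries c) (fun t => exp (2*m*t))); [apply D_explin|apply is_derive_Reals, is_derive_PSeries; auto]].
  rewrite PSeries_D. ring.
Qed.

Lemma rbar_lt_of (c : nat -> R) x : (forall k, Rabs (c k) <= Kc * Mc ^ k) -> 0 <= x < r0 ->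
  Rbar_lt (Rabs x) (CV_radius c).
Proof.
  intros H Hx. pose proof (radius_ge c H) as Hr. rewrite Rabs_pos_eq by lra.
  destruct (CV_radius c) as [r| |]; simpl in *; auto; lra.
Qed.


Lemma ips_plus a b x la lb : is_pseries a x la -> is_pseries b x lb ->
  is_pseries (fun k => a k + b k) x (la + lb).
Proof. intros H1 H2. exact (is_pseries_plus a b x la lb H1 H2). Qed.
Lemma ips_scal c a x la : is_pseries a x la -> is_pseries (fun k => c * a k) x (c * la).
Proof. intros H. exact (is_pseries_scal c a x la (Rmult_comm _ _) H). Qed.
Lemma ips_incr a x la : is_pseries a x la ->
  is_pseries (fun k => match k with O => 0 | S j => a j end) x (x * la).
Proof. intros H. exact (is_pseries_incr_1 a x la H). Qed.
Lemma ips_of c x : Rbar_lt (Rabs x) (CV_radius c) -> is_pseries c x (PSeries c x).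
Proof. intros H. apply PSeries_correct, CV_radius_inside; auto. Qed.
Lemma ips_zero c x l : is_pseries c x l -> (forall k, c k = 0) -> l = 0.
Proof.
  intros H H0. apply is_pseries_unique in H. rewrite <- H.
  rewrite (PSeries_ext c (fun _ => 0)) by auto. apply PSeries_const_0.
Qed.

Lemma sum_lin (f g : nat -> R) c k :
  sum_f_R0 f k - c * sum_f_R0 g k = sum_f_R0 (fun i => f i - c * g i) k.
Proof. induction k as [|k IH]; simpl; [ring|]. rewrite <- IH. ring. Qed.

Lemma geo_a k : Rabs (ca k) <= Kc * Mc ^ k. Proof. apply geo. Qed.
Lemma geo_b k : Rabs (cb k) <= Kc * Mc ^ k. Proof. apply geo. Qed.

Lemma rad_all x : 0 <= x < r0 ->
  Rbar_lt (Rabs x) (CV_radius ca) /\ Rbar_lt (Rabs x) (CV_radius cb) /\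
  Rbar_lt (Rabs x) (CV_radius (Dop ca)) /\ Rbar_lt (Rabs x) (CV_radius (Dop (Dop ca))) /\
  Rbar_lt (Rabs x) (CV_radius (Dop cb)).
Proof.
  intros Hx. pose proof (rbar_lt_of ca x geo_a Hx). pose proof (rbar_lt_of cb x geo_b Hx).
  rewrite !radius_D. auto.
Qed.

Lemma ident1 x : 0 <= x < r0 ->
  (1 + x)^2 * (4 * m^2 * PSeries (Dop (Dop ca)) x + 2 * m * al * PSeries (Dop ca) x
     - PSeries ca x + PSeries cb x) + n * x * PSeries ca x = 0.
Proof.
  intros Hx. destruct (rad_all x Hx) as (r1 & r2 & r3 & r4 & r5).
  set (SE := 4 * m^2 * PSeries (Dop (Dop ca)) x + 2 * m * al * PSeries (Dop ca) x
     - PSeries ca x + PSeries cb x).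
  assert (HE0 := ips_plus _ _ _ _ _ (ips_plus _ _ _ _ _ (ips_plus _ _ _ _ _
      (ips_scal (4*m^2) _ _ _ (ips_of _ x r4)) (ips_scal (2*m*al) _ _ _ (ips_of _ x r3)))
      (ips_scal (-1) _ _ _ (ips_of _ x r1))) (ips_of _ x r2)).
  assert (HE : is_pseries (ee ca cb) x SE).
  { replace SE with (4 * m ^ 2 * PSeries (Dop (Dop ca)) x + 2 * m * al * PSeries (Dop ca) x +
         -1 * PSeries ca x + PSeries cb x) by (unfold SE; ring).
    eapply is_pseries_ext; [|exact HE0].
    intros k. unfold ee, ell, Dop. simpl. ring. }
  assert (HZ := ips_plus _ _ _ _ _ (ips_plus _ _ _ _ _ (ips_plus _ _ _ _ _ HE (ips_scal 2 _ _ _ (ips_incr _ _ _ HE)))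
                   (ips_incr _ _ _ (ips_incr _ _ _ HE))) (ips_scal n _ _ _ (ips_incr _ _ _ (ips_of ca x r1)))).
  apply ips_zero in HZ.
  - replace ((1 + x)^2 * SE + n * x * PSeries ca x) with (SE + 2 * (x * SE) + x * (x * SE) + n * (x * PSeries ca x)) by ring.
    exact HZ.
  - intros [|k].
    + simpl. rewrite ee0. ring.
    + simpl. rewrite rec_e. unfold Ebig, eprev. destruct k; simpl; ring.
Qed.

Lemma ident2 x : 0 <= x < r0 ->
  (1 + x) * (PSeries ca x * PSeries (Dop cb) x - p * (PSeries (Dop ca) x * PSeries cb x))
   = q * x * (PSeries ca x * PSeries cb x).
Proof.
  intros Hx. destruct (rad_all x Hx) as (r1 & r2 & r3 & r4 & r5).
  assert (H1 := is_pseries_mult ca (Dop cb) x _ _ (ips_of ca x r1) (ips_of (Dop cb) x r5) r1 r5).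
  assert (H2 := is_pseries_mult (Dop ca) cb x _ _ (ips_of (Dop ca) x r3) (ips_of cb x r2) r3 r2).
  assert (H3 := is_pseries_mult ca cb x _ _ (ips_of ca x r1) (ips_of cb x r2) r1 r2).
  set (SU := PSeries ca x * PSeries (Dop cb) x - p * (PSeries (Dop ca) x * PSeries cb x)).
  assert (HU0 := ips_plus _ _ _ _ _ H1 (ips_scal (-p) _ _ _ H2)).
  assert (HU : is_pseries (uu ca cb) x SU).
  { replace SU with (PSeries ca x * PSeries (Dop cb) x + - p * (PSeries (Dop ca) x * PSeries cb x)) by (unfold SU; ring).
    eapply is_pseries_ext; [|exact HU0].
    intros k. simpl. unfold uu, PS_mult, Dop.
    replace (sum_f_R0 (fun k0 : nat => ca k0 * (INR (k - k0) * cb (k - k0)%nat)) k +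
       - p * sum_f_R0 (fun k0 : nat => INR k0 * ca k0 * cb (k - k0)%nat) k) with
      (sum_f_R0 (fun k0 : nat => ca k0 * (INR (k - k0) * cb (k - k0)%nat)) k -
       p * sum_f_R0 (fun k0 : nat => INR k0 * ca k0 * cb (k - k0)%nat) k) by ring.
    rewrite sum_lin. apply sum_eq. intros; ring. }
  assert (HZ := ips_plus _ _ _ _ _ (ips_plus _ _ _ _ _ HU (ips_incr _ _ _ HU))
                  (ips_scal (-q) _ _ _ (ips_incr _ _ _ H3))).
  apply ips_zero in HZ.
  - replace ((1 + x) * SU) with (SU + x * SU) by ring.
    replace (q * x * (PSeries ca x * PSeries cb x)) with (- (- q * (x * (PSeries ca x * PSeries cb x)))) by ring. lra.
  - intros [|k].
    + simpl. rewrite uu0. ring.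
    + simpl. rewrite rec_u. unfold conv, PS_mult. ring.
Qed.


Lemma cont_of_deriv f x l : derivable_pt_lim f x l -> continuity_pt f x.
Proof. intros H. apply derivable_continuous_pt. exists l. exact H. Qed.

Lemma cont_exp_lim g : continuity_pt g 0 -> forall eps, 0 < eps ->
  exists T, forall t, t <= T -> Rabs (g (exp (2*m*t)) - g 0) < eps.
Proof.
  intros Hc eps Heps. destruct (Hc eps Heps) as [d [Hd H]].
  exists (ln (d/2) / (2*m)). intros t Ht.
  pose proof (exp_small (2*m) (d/2) ltac:(lra) ltac:(lra) t Ht).
  pose proof (exp_pos (2*m*t)).
  apply (H (exp (2*m*t))). split.
  - split; [exact I|]. lra.
  - simpl. unfold R_dist. rewrite Rminus_0_r, Rabs_pos_eq; lra.
Qed.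

Lemma r0_pos : 0 < r0.
Proof. destruct consts_pos as (_ & _ & _ & _ & _ & HM & _). unfold r0. apply Rinv_0_lt_compat; lra. Qed.

Definition Xf (t : R) : R := exp (2*m*t).
Definition ysol (t : R) : R := PSeries ca (Xf t).
Definition y1sol (t : R) : R := 2*m * PSeries (Dop ca) (Xf t).
Definition y2sol (t : R) : R := 2*m * (2*m * PSeries (Dop (Dop ca)) (Xf t)).
Definition Wsol (t : R) : R := PSeries cb (Xf t).
Definition W1sol (t : R) : R := 2*m * PSeries (Dop cb) (Xf t).

Lemma Rpower_m1 z a : 0 < z -> Rpower z (a - 1) = Rpower z a / z.
Proof.
  intros Hz. unfold Rminus. rewrite Rpower_plus, Rpower_Ropp, Rpower_1 by auto. unfold Rdiv. auto.
Qed.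

Theorem exist_sol : exists T : R, (forall t, t <= T ->
   derivable_pt_lim ysol t (y1sol t) /\ derivable_pt_lim y1sol t (y2sol t) /\
   y2sol t + al * y1sol t - ysol t + Rpower (1 + exp (2*m*t)) q * Rpower (ysol t) p
     + n * exp (2*m*t) / (1 + exp (2*m*t))^2 * ysol t = 0) /\
  (forall eps, 0 < eps -> exists M, forall t, t <= M -> Rabs (ysol t - 1) < eps).
Proof.
  pose proof r0_pos as Hr0.
  destruct (rad_all 0 ltac:(lra)) as (q1 & q2 & _ & _ & _).
  assert (Hca : continuity_pt (PSeries ca) 0) by (apply PSeries_continuity; auto).
  assert (Hy0 : PSeries ca 0 = 1) by (rewrite PSeries_0; apply ca0).
  assert (Hylim : forall eps, 0 < eps -> exists M, forall t, t <= M -> Rabs (ysol t - 1) < eps).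
  { intros eps Heps. destruct (cont_exp_lim _ Hca eps Heps) as [M HM]. exists M.
    intros t Ht. rewrite <- Hy0. apply HM; auto. }
  destruct (Hylim (1/2) ltac:(lra)) as [T1 HT1].
  set (T := Rmin T1 (ln (r0/2) / (2*m))).
  assert (HT : forall t, t <= T -> 0 < Xf t < r0 /\ 1/2 < ysol t).
  { intros t Ht. split. split. apply exp_pos.
    pose proof (exp_small (2*m) (r0/2) ltac:(lra) ltac:(lra) t ltac:(pose proof (Rmin_r T1 (ln (r0/2) / (2*m))); unfold T in Ht; lra)).
    unfold Xf. lra.
    pose proof (HT1 t ltac:(pose proof (Rmin_l T1 (ln (r0/2) / (2*m))); unfold T in Ht; lra)).
    apply Rabs_def2 in H. lra. }
  assert (HD : forall t, t <= T -> derivable_pt_lim ysol t (y1sol t) /\ derivable_pt_lim y1sol t (y2sol t)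
      /\ derivable_pt_lim Wsol t (W1sol t)).
  { intros t Ht. destruct (HT t Ht) as [[hx1 hx2] _].
    destruct (rad_all (Xf t) ltac:(lra)) as (r1 & r2 & r3 & r4 & r5).
    split; [|split].
    - apply (deriv_ps ca t). exact r1.
    - unfold y1sol, y2sol. apply (D_scal (2*m) (fun t => PSeries (Dop ca) (Xf t))). apply (deriv_ps (Dop ca) t). exact r3.
    - apply (deriv_ps cb t). exact r2. }
  set (F := fun t => Wsol t * Rpower (1 + Xf t) (-q) * Rpower (ysol t) (-p)).
  assert (HF' : forall t, t <= T -> derivable_pt_lim F t 0).
  { intros t Ht. destruct (HT t Ht) as [[hx1 hx2] hy]. destruct (HD t Ht) as (d1 & d2 & d3).
    pose proof (ident2 (Xf t) ltac:(lra)) as Hid.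
    assert (dR1 : derivable_pt_lim (fun t => Rpower (1 + Xf t) (-q)) t
        ((-q) * Rpower (1 + Xf t) (-q - 1) * (0 + 2*m * Xf t))).
    { apply (D_comp (fun z => Rpower z (-q)) (fun t => 1 + Xf t)).
      apply D_plus. apply D_const. apply D_explin. apply derivable_pt_lim_power. lra. }
    assert (dR2 : derivable_pt_lim (fun t => Rpower (ysol t) (-p)) t
        ((-p) * Rpower (ysol t) (-p - 1) * y1sol t)).
    { apply (D_comp (fun z => Rpower z (-p)) ysol). auto. apply derivable_pt_lim_power. lra. }
    eapply D_eq; [|apply (D_mult (fun t => Wsol t * Rpower (1 + Xf t) (-q)) (fun t => Rpower (ysol t) (-p)));
       [apply (D_mult Wsol (fun t => Rpower (1 + Xf t) (-q))); [exact d3|exact dR1]|exact dR2]].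
    rewrite !Rpower_m1 by lra.
    unfold y1sol, W1sol, Wsol, ysol in *.
    set (Sa := PSeries ca (Xf t)) in *. set (Sb := PSeries cb (Xf t)) in *.
    set (SDa := PSeries (Dop ca) (Xf t)) in *. set (SDb := PSeries (Dop cb) (Xf t)) in *.
    set (x := Xf t) in *.
    assert (0 < Rpower (1 + x) (-q)) by (unfold Rpower; apply exp_pos).
    assert (0 < Rpower Sa (-p)) by (unfold Rpower; apply exp_pos).
    transitivity (2*m*Rpower (1 + x) (-q)*Rpower Sa (-p)/((1+x)*Sa) * ((1+x)*(Sa*SDb - p*(SDa*Sb)) - q*x*(Sa*Sb))).
    field. split; lra.
    rewrite Hid. ring. }
  assert (Hconst : forall s t, s <= t -> t <= T -> F s = F t).
  { intros s0 t Hst Ht.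
    assert (F s0 <= F t).
    { apply (incr_deriv F (fun _ => 0)); auto. intros c Hc; apply HF'; lra. intros; lra. }
    assert (- F s0 <= - F t).
    { apply (incr_deriv (fun u => - F u) (fun _ => - 0)); auto.
      intros c Hc; apply derivable_pt_lim_opp, HF'; lra. intros; lra. }
    lra. }
  set (G := fun x => PSeries cb x * Rpower (1 + x) (-q) * Rpower (PSeries ca x) (-p)).
  assert (HG0 : G 0 = 1).
  { unfold G. rewrite Hy0, PSeries_0, cb0, Rplus_0_r, !Rpower_1_base. ring. }
  assert (HGc : continuity_pt G 0).
  { eapply cont_of_deriv. unfold G.
    apply (D_mult (fun x => PSeries cb x * Rpower (1 + x) (-q)) (fun x => Rpower (PSeries ca x) (-p))).
    apply (D_mult (PSeries cb) (fun x => Rpower (1 + x) (-q))).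
    apply is_derive_Reals, is_derive_PSeries; auto.
    apply (D_comp (fun z => Rpower z (-q)) (fun x => 1 + x)). apply D_plus. apply D_const. apply D_id.
    apply derivable_pt_lim_power. lra.
    apply (D_comp (fun z => Rpower z (-p)) (PSeries ca)). apply is_derive_Reals, is_derive_PSeries; auto.
    apply derivable_pt_lim_power. rewrite Hy0. lra. }
  assert (HF1 : forall t, t <= T -> F t = 1).
  { intros t Ht. apply Rminus_diag_uniq. apply Rabs_eq_0. apply Rle_antisym; [|apply Rabs_pos].
    apply le_epsilon. intros eps Heps. rewrite Rplus_0_l.
    destruct (cont_exp_lim G HGc eps Heps) as [M HM].
    set (s0 := Rmin t M).
    rewrite <- (Hconst s0 t) by (unfold s0; pose proof (Rmin_l t M); lra).
    left. rewrite <- HG0. apply HM. unfold s0; apply Rmin_r. }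
  exists T. split; [|exact Hylim].
  intros t Ht. destruct (HD t Ht) as (d1 & d2 & d3). split; [auto|split; [auto|]].
  destruct (HT t Ht) as [[hx1 hx2] hy].
  pose proof (HF1 t Ht) as HFt. unfold F in HFt.
  assert (HW : Wsol t = Rpower (1 + Xf t) q * Rpower (ysol t) p).
  { rewrite !Rpower_Ropp in HFt.
    assert (0 < Rpower (1 + Xf t) q) by (unfold Rpower; apply exp_pos).
    assert (0 < Rpower (ysol t) p) by (unfold Rpower; apply exp_pos).
    apply (Rmult_eq_reg_r (/ Rpower (1 + Xf t) q * / Rpower (ysol t) p)).
    replace (Wsol t * (/ Rpower (1 + Xf t) q * / Rpower (ysol t) p)) with
       (Wsol t * / Rpower (1 + Xf t) q * / Rpower (ysol t) p) by ring.
    rewrite HFt. field. split; lra.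
    apply Rmult_integral_contrapositive. split; apply Rinv_neq_0_compat; lra. }
  pose proof (ident1 (Xf t) ltac:(lra)) as Hid.
  fold (Xf t). rewrite <- HW.
  unfold y2sol, y1sol, ysol, Wsol in *.
  set (x := Xf t) in *.
  apply (Rmult_eq_reg_r ((1 + x)^2)); [|nra].
  rewrite Rmult_0_l. rewrite <- Hid. field. lra.
Qed.

End Coeffs.

Theorem lemma4p2 (N : nat) (p : R) :
  (3 <= N)%nat -> pS N < p ->
  (exists (T : R) (y : R -> R), is_solution N p y T) /\
  (forall (y z : R -> R) (T1 T2 : R),
     is_solution N p y T1 -> is_solution N p z T2 ->
     exists T' : R, forall t, t <= T' -> y t = z t).
Proof.
  intros HN Hp. split; [|apply uniqueness; auto].
  destruct (params N p HN Hp) as (H3 & Hp1 & Hmu & Hk & Hm & Hal).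
  set (n := INR N * (INR N - 2)).
  assert (Hn : 0 <= n) by (unfold n; nra).
  destruct (exist_sol (m_const N p) (alpha_const N p) n (q_const N p) p Hm ltac:(lra) Hp1 Hn) as [T [HT Hlim]].
  exists T. eexists. split; [|exact Hlim].
  do 2 eexists. intros t Ht. destruct (HT t Ht) as (d1 & d2 & E).
  split; [exact d1|]. split; [exact d2|].
  unfold powp, B0, Defs.B1. fold n. lra.
Qed.
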